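(* Let $G$ and $H$ be finite simple graphs, let $U\subseteq V_G$, and let $k$ be an integer. Then $$\gamma^d_k(G(U)\sqcap H)\leq \gamma^d_{k}(G)\,n(H),$$ where $n(H)=|V_H|$ and $\infty\cdot n(H)=\infty$.
   Context: All graphs are finite and simple. For a graph $G=(V_G,E_G)$, $S\subseteq V_G$ and $v\in V_G$, let $N_S(v)=\{u\in S: uv\in E_G\}$ and $\bar S=V_G\setminus S$. A set $D\subseteq V_G$ is dominating if every vertex outside $D$ has a neighbor in $D$. For an integer $k$, a nonempty set $S\subseteq V_G$ is a global defensive $k$-alliance (GD$k$-A) in $G$ if $S$ is dominating and $|N_S(v)|\ge |N_{\bar S}(v)|+k$ for every $v\in S$. The number $\gamma^d_k(G)$ is the minimum cardinality of a GD$k$-A in $G$, and $\gamma^d_k(G)=\infty$ if $G$ has none. For $U\subseteq V_G$, the generalized hierarchical product $G(U)\sqcap H$ has vertex set $V_G\times V_H$, with $(g,h)$ and $(g',h')$ adjacent iff either $g=g'\in U$ and $hh'\in E_H$, or $gg'\in E_G$ and $h=h'$. *)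

(* Defs.v *)
From mathcomp Require Import all_boot all_order all_algebra.
Set Implicit Arguments. Unset Strict Implicit. Unset Printing Implicit Defensive.
Import Order.TTheory GRing.Theory Num.Theory.

Definition simple_graph (T : finType) (e : rel T) : Prop :=
  symmetric e /\ irreflexive e.

Definition nbhd_in (T : finType) (e : rel T) (S : {set T}) (v : T) : {set T} :=
  [set u in S | e v u].

Definition dominating (T : finType) (e : rel T) (S : {set T}) : bool :=
  [forall v, (v \notin S) ==> [exists u in S, e v u]].

Definition is_gdka (T : finType) (e : rel T) (k : int) (S : {set T}) : bool :=
  [&& S != set0, dominating e S &
      [forall v in S,
        (#|nbhd_in e (~: S) v|%:Z + k <= #|nbhd_in e S v|%:Z)%R]].

(* gamma^d_k(G) : None encodes infinity *)
Definition gdk_number (T : finType) (e : rel T) (k : int) : option nat :=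
  if [exists S : {set T}, is_gdka e k S]
  then Some (\big[minn/#|T|]_(S : {set T} | is_gdka e k S) #|S|)
  else None.

Definition ole (a b : option nat) : Prop :=
  match a, b with
  | _, None => True
  | None, Some _ => False
  | Some x, Some y => (x <= y)%N
  end.

Definition omuln (a : option nat) (n : nat) : option nat :=
  match a with Some x => Some (x * n)%N | None => None end.

Definition hier_prod (TG TH : finType) (eG : rel TG) (eH : rel TH)
  (U : {set TG}) : rel (TG * TH) :=
  fun x y => ((x.1 == y.1) && (x.1 \in U) && eH x.2 y.2)
             || (eG x.1 y.1 && (x.2 == y.2)).

(* Main.v *)
Require Import Defs.
From mathcomp Require Import all_boot all_order all_algebra.
From mathcomp Require Import zify.
Import Order.TTheory GRing.Theory Num.Theory.

Lemma bigmin_le (I : finType) (P : pred I) (F : I -> nat) x i :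
  P i -> (\big[minn/x]_(j | P j) F j <= F i)%N.
Proof.
move=> Pi; have: i \in index_enum I := mem_index_enum i.
elim: (index_enum I) => //= a s IH; rewrite inE big_cons => /orP[/eqP<-|/IH H].
  by rewrite Pi geq_minl.
case: (P a) => //; exact: leq_trans (geq_minr _ _) H.
Qed.

Lemma bigmin_attained (I : finType) (P : pred I) (F : I -> nat) x :
  x = \big[minn/x]_(j | P j) F j \/ exists2 i, P i & F i = \big[minn/x]_(j | P j) F j.
Proof.
apply: (big_ind (fun y => x = y \/ exists2 i, P i & F i = y)).
- by left.
- move=> a b Ha Hb; case: (leqP a b) => ab //.
- by move=> i Pi; right; exists i.
Qed.

Theorem mainTheorem1 (TG TH : finType) (eG : rel TG) (eH : rel TH)
  (hG : simple_graph eG) (hH : simple_graph eH) (hHne : (0 < #|TH|)%N)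
  (U : {set TG}) (k : int) :
  ole (gdk_number (hier_prod eG eH U) k) (omuln (gdk_number eG k) #|TH|).
Proof.
rewrite /gdk_number.
case E: [exists S : {set TG}, is_gdka eG k S]; last by case: ifP.
case/existsP: E => S0 HS0.
set m := \big[minn/#|TG|]_(S | is_gdka eG k S) #|S|.
have [S HS Sm] : exists2 S, is_gdka eG k S & (#|S| <= m)%N.
  case: (@bigmin_attained _ (is_gdka eG k) (fun S => #|S|) #|TG|) => [E|[S HS E]].
    by exists S0 => //; rewrite /m -E; exact: max_card.
  by exists S => //; rewrite /m -E.
set S' := setX S [set: TH].
have HS' : is_gdka (hier_prod eG eH U) k S'.
  move: HS => /and3P[Sne /forallP Sdom /forall_inP Sall].
  apply/and3P; split.
  - case/set0Pn: Sne => g gS.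
    have : [set: TH] != set0 by rewrite -card_gt0 cardsT.
    case/set0Pn => h _.
    by apply/set0Pn; exists (g, h); rewrite inE /= gS in_setT.
  - apply/forallP => [[g h]]; apply/implyP.
    rewrite inE /= in_setT andbT => gS.
    have /implyP/(_ gS)/exists_inP[u uS eu] := Sdom g.
    by apply/exists_inP; exists (u, h); rewrite ?inE /= ?uS ?in_setT // /hier_prod /= eu eqxx orbT.
  - apply/forall_inP => [[g h]]; rewrite inE /= in_setT andbT => gS.
    have Hg := Sall g gS.
    have L1 : (#|nbhd_in (hier_prod eG eH U) (~: S') (g, h)| <= #|nbhd_in eG (~: S) g|)%N.
      apply: leq_trans (leq_imset_card (fun u => (u, h)) _).
      apply: subset_leq_card; apply/subsetP => [[g' h']].
      rewrite !inE /= ?andbT /hier_prod /= => /andP[g'S /orP[/andP[/andP[/eqP eq _] _]|/andP[e /eqP eh]]].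
        by rewrite -eq gS in g'S.
      by apply/imsetP; exists g'; rewrite ?inE ?g'S ?e // eh.
    have L2 : (#|nbhd_in eG S g| <= #|nbhd_in (hier_prod eG eH U) S' (g, h)|)%N.
      rewrite -(card_imset _ (fun a b (E : (a, h) = (b, h)) => congr1 fst E)).
      apply: subset_leq_card; apply/subsetP => x /imsetP[u].
      rewrite !inE => /andP[uS e] ->.
      by rewrite /= ?uS ?in_setT /hier_prod /= e eqxx orbT.
    apply: (le_trans _ (le_trans Hg _)); first by rewrite lerD2r lez_nat.
    by rewrite lez_nat.
rewrite (_ : [exists S, is_gdka _ k S] = true); last by apply/existsP; exists S'.
rewrite /=; have := @bigmin_le _ _ (fun S1 : {set TG * TH} => #|S1|) _ _ HS'.
move=> /(_ #|[set: TG * TH]|); rewrite cardsT => /leq_trans; apply.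
by rewrite /S' cardsX cardsT leq_mul2r Sm orbT.
Qed.
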